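(* Let $\lambda_1,\lambda_2$ be two distinct lines in $\mathbb{R}^2$ given by $\Lambda_i=0$, where $\Lambda_i=\alpha_i x+\beta_i y+\gamma_i$ with real coefficients and with $\alpha_i\neq0$ and $\beta_i\neq0$ for $i=1,2$. Then the bivariate cubic polynomial $f(x,y)=xy\Lambda_1+\Lambda_2$ is irreducible. *)

(* Defs.v *)
From HB Require Import structures.
From mathcomp Require Import all_boot all_order all_algebra.
From mathcomp Require Import mpoly.
Set Implicit Arguments. Unset Strict Implicit. Unset Printing Implicit Defensive.
Import Order.TTheory GRing.Theory Num.Theory.
Local Open Scope ring_scope.

Definition irreducible_elt (D : idomainType) (p : D) : Prop :=
  p != 0 /\ ~~ (p \is a GRing.unit) /\
  (forall q r : D, p = q * r -> (q \is a GRing.unit) \/ (r \is a GRing.unit)).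

Definition linform (R : nzRingType) (a b c : R) : {mpoly R[2]} :=
  a *: 'X_0 + b *: 'X_1 + c%:MP.

(* Main.v *)
Require Import Defs.
From HB Require Import structures.
From mathcomp Require Import all_boot all_order all_algebra.
From mathcomp Require Import mpoly.
From mathcomp Require Import ring lra.
Import Order.TTheory GRing.Theory Num.Theory.
Local Open Scope ring_scope.
Set Implicit Arguments. Unset Strict Implicit. Unset Printing Implicit Defensive.

Lemma cubic0 (R : realFieldType) (A B C D : R) :
  (forall t, A*(t*t*t) + B*(t*t) + C*t + D = 0) -> [/\ A = 0, B = 0, C = 0 & D = 0].
Proof.
move=> H; have h0 := H 0; have h1 := H 1; have h2 := H (-1); have h3 := H 2.
split; lra.
Qed.

Lemma quad0 (R : realFieldType) (B C D : R) :
  (forall t, B*(t*t) + C*t + D = 0) -> [/\ B = 0, C = 0 & D = 0].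
Proof.
move=> H; have [] := @cubic0 R 0 B C D => [t|]; first by rewrite mul0r add0r.
by [].
Qed.

Lemma real_contra (R : realFieldType) (a1 b1 c1 a2 b2 c2 u v w : R) :
 a1 != 0 -> b1 != 0 -> a2 != 0 -> b2 != 0 ->
 ~ (forall x y, (a1*x+b1*y+c1 = 0) <-> (a2*x+b2*y+c2=0)) ->
 (u != 0) || (v != 0) ->
 (forall x y, u*x+v*y+w = 0 -> x*y*(a1*x+b1*y+c1) + (a2*x+b2*y+c2) = 0) -> False.
Proof.
move=> na1 nb1 na2 nb2 Hd Huv H.
have [v0|nv] := eqVneq v 0.
  rewrite v0 eqxx orbF in Huv.
  have /quad0 [B0 C0 _] : forall t, (-(w*b1*u))*(t*t) + (u*u*b2 + w*(a1*w - c1*u))*t + u*(c2*u - a2*w) = 0.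
    move=> t.
    have E : (- w / u) * t * (a1 * (- w / u) + b1 * t + c1) + (a2 * (- w / u) + b2 * t + c2) = 0.
      by apply: H; rewrite v0; field; exact: Huv.
    have : u*u*((- w / u) * t * (a1 * (- w / u) + b1 * t + c1) + (a2 * (- w / u) + b2 * t + c2)) = 0 by rewrite E mulr0.
    move=> E'; rewrite -[RHS]E'; field; exact: Huv.
  have w0 : w = 0.
    move/eqP: B0; rewrite oppr_eq0 !mulf_eq0 (negbTE nb1) (negbTE Huv) !orbF.
    by move/eqP.
  by move/eqP: C0; rewrite w0 !(mul0r,addr0) !mulf_eq0 (negbTE nb2) (negbTE Huv).
have /cubic0 [A0 B0 C0 D0] : forall t, (-u*(a1*v-b1*u))*(t*t*t) + (-u*(c1*v-b1*w) - w*(a1*v-b1*u))*(t*t) +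
    (-w*(c1*v-b1*w) + v*(a2*v-b2*u))*t + (v*(c2*v-b2*w)) = 0.
  move=> t.
  have E : t * (-(u*t+w)/v) * (a1 * t + b1 * (-(u*t+w)/v) + c1) + (a2 * t + b2 * (-(u*t+w)/v) + c2) = 0.
    by apply: H; field; exact: nv.
  have : v*v*(t * (-(u*t+w)/v) * (a1 * t + b1 * (-(u*t+w)/v) + c1) + (a2 * t + b2 * (-(u*t+w)/v) + c2)) = 0 by rewrite E mulr0.
  move=> E'; rewrite -[RHS]E'; field; exact: nv.
have {}D0 : c2 = b2 * w / v.
  move/eqP: D0; rewrite mulf_eq0 (negbTE nv) /= subr_eq0 => /eqP E.
  apply: (mulIf nv); rewrite E; field; exact: nv.
have [u0|nu] := eqVneq u 0.
  have w0 : w = 0.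
    move/eqP: B0; rewrite u0 !(mul0r,mulr0,oppr0,add0r,subr0) oppr_eq0 !mulf_eq0.
    by rewrite (negbTE na1) (negbTE nv) !orbF => /eqP.
  move/eqP: C0; rewrite u0 w0 !(mul0r,mulr0,oppr0,add0r,subr0) !mulf_eq0.
  by rewrite (negbTE na2) (negbTE nv).
have {}A0 : a1 = b1 * u / v.
  move/eqP: A0; rewrite mulf_eq0 oppr_eq0 (negbTE nu) /= subr_eq0 => /eqP E.
  apply: (mulIf nv); rewrite E; field; exact: nv.
have {}B0 : c1 = b1 * w / v.
  move/eqP: B0.
  have -> : a1 * v - b1 * u = 0 by rewrite A0; field.
  rewrite mulr0 subr0 mulf_eq0 oppr_eq0 (negbTE nu) /= subr_eq0 => /eqP E.
  apply: (mulIf nv); rewrite E; field; exact: nv.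
have {}C0 : a2 = b2 * u / v.
  move/eqP: C0.
  have -> : c1 * v - b1 * w = 0 by rewrite B0; field.
  rewrite mulr0 add0r mulf_eq0 (negbTE nv) /= subr_eq0 => /eqP E.
  apply: (mulIf nv); rewrite E; field; exact: nv.
apply: Hd => x y.
have -> : a1 * x + b1 * y + c1 = (b1/v) * (u*x+v*y+w) by rewrite A0 B0; field.
have -> : a2 * x + b2 * y + c2 = (b2/v) * (u*x+v*y+w) by rewrite C0 D0; field.
split => /eqP; rewrite mulf_eq0 mulf_eq0 invr_eq0 (negbTE nv) ?(negbTE nb1) ?(negbTE nb2) /= => /eqP ->;
  by rewrite mulr0.
Qed.
Lemma lin_shape (R : fieldType) (q : {mpoly R[2]}) : msize q = 2%N ->
  exists u v w : R, ((u != 0) || (v != 0)) /\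
    q = u *: 'X_0 + v *: 'X_1 + w%:MP.
Proof.
move=> Hq; exists q@_(mnm1 (0 : 'I_2)), q@_(mnm1 (1 : 'I_2)), q@_0%MM.
have E : q = q@_(mnm1 (0 : 'I_2)) *: 'X_0 + q@_(mnm1 (1 : 'I_2)) *: 'X_1 + (q@_0%MM)%:MP.
  apply/mpolyP => m; rewrite !mcoeffD !mcoeffZ !mcoeffX mcoeffC.
  case: (ltnP (mdeg m) 2) => hm.
    have [/eqP|] := eqVneq (mdeg m) 0%N.
      rewrite mdeg_eq0 => /eqP ->.
      by rewrite !mnm1_eq0 !mulr0 !add0r eqxx mulr1.
    move=> h1; have /mdeg1P [i /eqP ->] : mdeg m == 1%N.
      by case: (mdeg m) hm h1 => [|[|]].
    case: i => [[|[|k]] Hk].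
    - have -> : Ordinal Hk = 0 by apply/val_inj.
      by rewrite eqxx mnm1_eq0 eq_mnm1 /= !mulr0 mulr1 !addr0.
    - have -> : Ordinal Hk = 1 by apply/val_inj.
      by rewrite eqxx mnm1_eq0 eq_mnm1 /= !mulr0 mulr1 addr0 add0r.
    - by [].
  have -> : q@_m = 0.
    by apply: memN_msupp_eq0; apply: msize_mdeg_ge; rewrite Hq.
  have ne : forall i, (mnm1 i == m) = false.
    by move=> i; apply/negbTE/eqP => hi; move: hm; rewrite -hi mdeg1.
  have -> : (m == 0%MM) = false.
    by apply/negbTE/eqP => hi; move: hm; rewrite hi mdeg0.
  by rewrite !ne !mulr0 !addr0.
split => //; have [u0|] := eqVneq (q@_(mnm1 (0 : 'I_2))) 0; last by [].
have [v0|] := eqVneq (q@_(mnm1 (1 : 'I_2))) 0; last by rewrite orbT.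
move: Hq; rewrite E u0 v0 !scale0r !add0r msizeC.
by case: (_ != 0).
Qed.

Definition pt (R : nzRingType) (x y : R) : 'I_2 -> R :=
  fun i => if val i == 0%N then x else y.

Lemma eval_lin (R : comNzRingType) (a b c x y : R) :
  (linform a b c).@[pt x y] = a * x + b * y + c.
Proof. by rewrite /linform !mevalD !mevalZ !mevalXU mevalC. Qed.

Lemma msize_lin (R : comNzRingType) (a b c : R) : (msize (linform a b c) <= 2)%N.
Proof.
rewrite /linform; apply: (leq_trans (msizeD_le _ _)); rewrite geq_max; apply/andP; split.
  apply: (leq_trans (msizeD_le _ _)); rewrite geq_max; apply/andP; split;
  by apply: (leq_trans (msizeZ_le _ _)); rewrite msizeX mdeg1.
by rewrite msizeC; case: (_ != 0).
Qed.

Theorem lemma2 (R : realFieldType) (a1 b1 c1 a2 b2 c2 : R) :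
  a1 != 0 -> b1 != 0 -> a2 != 0 -> b2 != 0 ->
  (* the lines a1 x + b1 y + c1 = 0 and a2 x + b2 y + c2 = 0 are distinct *)
  ~ (forall x y : R, (a1 * x + b1 * y + c1 = 0) <-> (a2 * x + b2 * y + c2 = 0)) ->
  irreducible_elt ('X_0 * 'X_1 * linform a1 b1 c1 + linform a2 b2 c2 : {mpoly R[2]}).
Proof.
move=> na1 nb1 na2 nb2 Hd.
set f := (X in irreducible_elt X).
have Ef : forall x y, f.@[pt x y] = x * y * (a1 * x + b1 * y + c1) + (a2 * x + b2 * y + c2).
  by move=> x y; rewrite /f mevalD !mevalM !eval_lin !mevalXU.
have fnc : forall c, f <> c%:MP.
  move=> c E; have h0 := Ef 0 0; have h1 := Ef 1 0; rewrite E mevalC in h0 h1.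
  rewrite mevalC in h1; have : a2 = 0 by lra.
  by move/eqP; rewrite (negbTE na2).
have nf : f != 0 by apply/eqP => E; apply: (fnc 0); rewrite E mpolyC0.
split; first exact: nf.
split.
  apply/negP => /unitrP [g [gf _]].
  have /andP [/eqP E _] := mpoly_intro_unit gf.
  exact: (fnc _ E).
move=> q r Hqr.
have nq : q != 0 by apply/eqP => q0; move/eqP: nf; rewrite Hqr q0 mul0r.
have nr : r != 0 by apply/eqP => r0; move/eqP: nf; rewrite Hqr r0 mulr0.
have U1 : forall p : {mpoly R[2]}, msize p = 1%N -> p \is a GRing.unit.
  move=> p /eqP/msize_poly1P [c nc ->]; apply/unitrP; exists c^-1%:MP.
  by rewrite -!mpolyCM mulVf ?mulfV.
have Hs : (msize f <= 4)%N.
  rewrite /f; apply: (leq_trans (msizeD_le _ _)); rewrite geq_max; apply/andP; split; last first.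
    by apply: (leq_trans (msize_lin _ _ _)).
  have [->|nl] := eqVneq (linform a1 b1 c1) 0; first by rewrite mulr0 msize0.
  have nX : forall i : 'I_2, ('X_i : {mpoly R[2]}) != 0.
    by move=> i; rewrite -msize_poly_eq0 msizeX mdeg1.
  rewrite msizeM ?mulf_neq0 // msizeM // !msizeX !mdeg1.
  by have := msize_lin a1 b1 c1; case: (msize _) => [|[|[|]]].
have key : forall p : {mpoly R[2]}, msize p = 2%N ->
    (forall x y, p.@[pt x y] = 0 -> f.@[pt x y] = 0) -> False.
  move=> p /lin_shape [u [v [w [Huv Ep]]]] Hp.
  apply: (real_contra na1 nb1 na2 nb2 Hd Huv) => x y Hxy.
  rewrite -Ef; apply: Hp; rewrite Ep !mevalD !mevalZ !mevalXU mevalC.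
  exact: Hxy.
have [q1|q1] := eqVneq (msize q) 1%N; first by left; apply: U1.
have [r1|r1] := eqVneq (msize r) 1%N; first by right; apply: U1.
have q0 : msize q != 0%N by rewrite msize_poly_eq0.
have r0 : msize r != 0%N by rewrite msize_poly_eq0.
move: Hs; rewrite Hqr msizeM // => Hs.
have [q2|q2] := eqVneq (msize q) 2%N.
  exfalso; apply: (key q q2) => x y h; by rewrite Hqr mevalM h mul0r.
have r2 : msize r = 2%N.
  move: Hs q0 r0 q1 r1 q2; case: (msize q) => [|[|[|k]]] //; case: (msize r) => [|[|[|l]]] //.
  by rewrite addSn !addnS.
exfalso; apply: (key r r2) => x y h; by rewrite Hqr mevalM h mulr0.
Qed.
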